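(* There exist constants $c>0$ and $\alpha_0\in(0,\frac12]$ such that for every $\alpha\in(0,\alpha_0]$, every Any-Fit algorithm $A$ for stochastic bin packing of scaled Bernoulli items with overflow bound $\alpha$, and every positive integer $N$, there is an instance of independent items $X_i\sim\operatorname{Ber}(p_i,s_i)$ with $p_i\in(0,1]$, $s_i\in(0,1]$, whose optimal viable packing uses $OPT\ge N$ bins and on which $A$ uses at least $c\,\alpha^{-1/2}\cdot OPT$ bins. In other words, every Any-Fit algorithm has approximation ratio $\Omega(\alpha^{-1/2})$.
   Context: $X\sim\operatorname{Ber}(p,s)$ means $X=s$ with probability $p$ and $0$ otherwise. Bins have capacity $1$; a set of independent items in a bin is viable if its sum $B$ satisfies $\mathbb{P}(B>1)\le\alpha$, and a packing is viable if all bins are; $OPT$ is the minimum number of bins of a viable packing. An Any-Fit algorithm processes items online in the given order, always keeps every bin viable, and opens a new bin for the current item only if adding it to any already opened bin would make that bin non-viable. *)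

(* Defs.v *)
From Stdlib Require Import Reals List Arith.
Import ListNotations.
Open Scope R_scope.

(* A scaled Bernoulli item X ~ Ber(p, s): X = s with probability p, else 0. *)
Record item := mkItem { bprob : R; bsize : R }.

Definition valid_item (x : item) : Prop :=
  0 < bprob x <= 1 /\ 0 < bsize x <= 1.

(* All outcome vectors (which items are "on") of length n. *)
Fixpoint outcomes (n : nat) : list (list bool) :=
  match n with
  | O => [[]]
  | S k => map (cons true) (outcomes k) ++ map (cons false) (outcomes k)
  end.

Fixpoint outcome_prob (l : list item) (o : list bool) : R :=
  match l, o with
  | x :: l', b :: o' => (if b then bprob x else 1 - bprob x) * outcome_prob l' o'
  | _, _ => 1
  end.

Fixpoint outcome_sum (l : list item) (o : list bool) : R :=
  match l, o with
  | x :: l', b :: o' => (if b then bsize x else 0) + outcome_sum l' o'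
  | _, _ => 0
  end.

Definition overflow_prob (l : list item) : R :=
  fold_right Rplus 0
    (map (fun o => if Rlt_dec 1 (outcome_sum l o) then outcome_prob l o else 0)
         (outcomes (length l))).

Definition viable (alpha : R) (l : list item) : Prop := overflow_prob l <= alpha.

(* Offline packings: assignment f of item indices to bins 0..m-1. *)
Definition bin_of (items : list item) (f : nat -> nat) (j : nat) : list item :=
  map fst (filter (fun xi => Nat.eqb (f (snd xi)) j)
                  (combine items (seq 0 (length items)))).

Definition viable_packing (alpha : R) (items : list item) (m : nat) (f : nat -> nat) : Prop :=
  (forall i, (i < length items)%nat -> (f i < m)%nat) /\
  (forall j, (j < m)%nat -> viable alpha (bin_of items f j)).

Definition is_OPT (alpha : R) (items : list item) (opt : nat) : Prop :=
  (exists f, viable_packing alpha items opt f) /\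
  (forall m f, viable_packing alpha items m f -> (opt <= m)%nat).

(* An online algorithm: given the previously processed items (in order),
   the current bins (each a list of items) and the current item, returns
   the index of the bin to put the item into; an index >= number of bins
   means "open a new bin". *)
Definition algorithm := list item -> list (list item) -> item -> nat.

Definition any_fit (alpha : R) (A : algorithm) : Prop :=
  forall past bins x,
    Forall (viable alpha) bins ->
    ((A past bins x < length bins)%nat ->
        viable alpha (nth (A past bins x) bins [] ++ [x])) /\
    ((length bins <= A past bins x)%nat ->
        forall b, In b bins -> ~ viable alpha (b ++ [x])).

Fixpoint add_to (k : nat) (bins : list (list item)) (x : item) : list (list item) :=
  match bins, k with
  | b :: bs, O => (b ++ [x]) :: bs
  | b :: bs, S k' => b :: add_to k' bs x
  | [], _ => []
  end.

Fixpoint run_aux (A : algorithm) (past : list item) (bins : list (list item))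
    (items : list item) : list (list item) :=
  match items with
  | [] => bins
  | x :: r =>
      let k := A past bins x in
      let bins' := if Nat.ltb k (length bins) then add_to k bins x
                   else bins ++ [[x]] in
      run_aux A (past ++ [x]) bins' r
  end.

Definition bins_used (A : algorithm) (items : list item) : nat :=
  length (run_aux A [] [] items).

(* Main.v *)
Require Import Defs.
From Stdlib Require Import Reals List Arith Lia Lra Wf_nat ZArith Classical.
Import ListNotations.
Open Scope R_scope.


Definition sumR (l : list R) : R := fold_right Rplus 0 l.

Definition ovf (l : list item) (t : R) : R :=
  sumR (map (fun o => if Rlt_dec t (outcome_sum l o) then outcome_prob l o else 0)
            (outcomes (length l))).

Lemma sumR_app a b : sumR (a ++ b) = sumR a + sumR b.
Proof. induction a; simpl; [ring|]. unfold sumR in *; simpl; rewrite IHa; ring. Qed.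

Lemma sumR_scal {A} c (l : list A) f :
  sumR (map (fun o => c * f o) l) = c * sumR (map f l).
Proof. induction l; unfold sumR in *; simpl; [ring|]. rewrite IHl; ring. Qed.

Lemma ovf_cons x l t :
  ovf (x :: l) t = bprob x * ovf l (t - bsize x) + (1 - bprob x) * ovf l t.
Proof.
  unfold ovf. simpl length. simpl outcomes. rewrite map_app, sumR_app, !map_map.
  f_equal.
  - rewrite <- sumR_scal. f_equal. apply map_ext. intro o. simpl.
    destruct (Rlt_dec t (bsize x + outcome_sum l o));
    destruct (Rlt_dec (t - bsize x) (outcome_sum l o)); try lra; ring.
  - rewrite <- sumR_scal. f_equal. apply map_ext. intro o. simpl.
    destruct (Rlt_dec t (0 + outcome_sum l o));
    destruct (Rlt_dec t (outcome_sum l o)); try lra; ring.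
Qed.

Lemma ovf_nil t : ovf [] t = if Rlt_dec t 0 then 1 else 0.
Proof. unfold ovf, sumR; simpl. destruct (Rlt_dec t 0); ring. Qed.

Lemma ovf_snoc l x t : ovf (l ++ [x]) t = ovf (x :: l) t.
Proof.
  revert t; induction l as [|y l IH]; intro t; [reflexivity|].
  simpl app. rewrite ovf_cons, !IH, !ovf_cons.
  replace (t - bsize y - bsize x) with (t - bsize x - bsize y) by ring. ring.
Qed.

Lemma overflow_ovf l : overflow_prob l = ovf l 1.
Proof. reflexivity. Qed.

Definition probok (x : item) := 0 <= bprob x <= 1.

Lemma ovf_nonneg l t : Forall probok l -> 0 <= ovf l t.
Proof.
  intro H; revert t; induction H as [|x l Hx Hl IH]; intro t.
  - rewrite ovf_nil; destruct Rlt_dec; lra.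
  - rewrite ovf_cons. unfold probok in Hx.
    specialize (IH t) as A1. specialize (IH (t - bsize x)) as A2. nra.
Qed.

Lemma ovf_neg l t : Forall probok l -> Forall (fun x => 0 <= bsize x) l -> t < 0 -> ovf l t = 1.
Proof.
  intros H H2; revert t; induction H as [|x l Hx Hl IH]; intros t Ht.
  - rewrite ovf_nil; destruct Rlt_dec; lra.
  - inversion H2; subst. rewrite ovf_cons, !IH; auto; try ring. lra.
Qed.

Fixpoint sumsize (l : list item) : R :=
  match l with [] => 0 | x :: l => bsize x + sumsize l end.

Lemma ovf_zero l t : Forall (fun x => 0 <= bsize x) l -> sumsize l <= t -> ovf l t = 0.
Proof.
  intro H; revert t; induction H as [|x l Hx Hl IH]; intros t Ht; simpl in Ht.
  - rewrite ovf_nil; destruct Rlt_dec; lra.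
  - rewrite ovf_cons, !IH; lra.
Qed.

Fixpoint detsum (l : list item) : R :=
  match l with [] => 0
  | x :: l => (if Req_EM_T (bprob x) 1 then bsize x else 0) + detsum l end.

Lemma detsum_app a b : detsum (a ++ b) = detsum a + detsum b.
Proof. induction a; simpl; [ring|]. rewrite IHa; ring. Qed.

Lemma ovf_one l t : Forall (fun x => 0 <= bsize x) l -> t < detsum l -> ovf l t = 1.
Proof.
  intro H; revert t; induction H as [|x l Hx Hl IH]; intros t Ht; simpl in Ht.
  - rewrite ovf_nil; destruct Rlt_dec; lra.
  - rewrite ovf_cons. destruct (Req_EM_T (bprob x) 1) as [E|E].
    + rewrite E, IH by lra. ring.
    + rewrite !IH by lra. ring.
Qed.


Lemma combine_app {A B} (l1 l2 : list A) (m1 m2 : list B) :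
  length l1 = length m1 -> combine (l1 ++ l2) (m1 ++ m2) = combine l1 m1 ++ combine l2 m2.
Proof.
  revert m1; induction l1; intros [|b m1] H; simpl in *; try discriminate; auto.
  rewrite IHl1; auto.
Qed.

Lemma bin_of_snoc l x f j :
  bin_of (l ++ [x]) f j = bin_of l f j ++ (if Nat.eqb (f (length l)) j then [x] else []).
Proof.
  unfold bin_of. rewrite length_app. simpl length.
  rewrite seq_app, combine_app by (rewrite length_seq; auto).
  rewrite filter_app, map_app. f_equal. simpl.
  destruct (Nat.eqb (f (length l)) j); reflexivity.
Qed.

Lemma bin_of_in l f j x : In x (bin_of l f j) -> In x l.
Proof.
  unfold bin_of. intro H. apply in_map_iff in H as [[a i] [E H]]. simpl in E; subst.
  apply filter_In in H as [H _]. eapply in_combine_l; eauto.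
Qed.

Lemma sum_ind_seq (c : nat) v m s :
  sumR (map (fun j => if Nat.eqb c j then v else 0) (seq s m)) =
  if (andb (Nat.leb s c) (Nat.ltb c (s + m))) then v else 0.
Proof.
  revert s; induction m; intro s; simpl.
  - unfold sumR; simpl. destruct (Nat.leb s c) eqn:E1; destruct (Nat.ltb c (s+0)) eqn:E2; simpl; auto.
    apply Nat.leb_le in E1; apply Nat.ltb_lt in E2; lia.
  - unfold sumR in *; simpl. rewrite IHm.
    destruct (Nat.eqb c s) eqn:E0.
    + apply Nat.eqb_eq in E0; subst.
      destruct (Nat.leb (S s) s) eqn:E1; [apply Nat.leb_le in E1; lia|].
      rewrite Nat.leb_refl. simpl. destruct (Nat.ltb s (s + S m)) eqn:E2; [ring|].
      apply Nat.ltb_ge in E2; lia.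
    + apply Nat.eqb_neq in E0.
      destruct (Nat.leb (S s) c) eqn:E1; destruct (Nat.leb s c) eqn:E1';
      destruct (Nat.ltb c (S s + m)) eqn:E2; destruct (Nat.ltb c (s + S m)) eqn:E2'; simpl;
      try ring;
      repeat match goal with
      | H : Nat.leb _ _ = true |- _ => apply Nat.leb_le in H
      | H : Nat.leb _ _ = false |- _ => apply Nat.leb_gt in H
      | H : Nat.ltb _ _ = true |- _ => apply Nat.ltb_lt in H
      | H : Nat.ltb _ _ = false |- _ => apply Nat.ltb_ge in H
      end; lia.
Qed.

Lemma sumR_plus {A} (f g : A -> R) l :
  sumR (map (fun j => f j + g j) l) = sumR (map f l) + sumR (map g l).
Proof. induction l; unfold sumR in *; simpl; [ring|]. rewrite IHl; ring. Qed.

Lemma sum_bins_detsum l f m :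
  (forall i, (i < length l)%nat -> (f i < m)%nat) ->
  sumR (map (fun j => detsum (bin_of l f j)) (seq 0 m)) = detsum l.
Proof.
  induction l as [|x l IH] using rev_ind; intro H.
  - unfold bin_of; simpl. clear H. induction (seq 0 m); unfold sumR in *; simpl; auto. rewrite IHl; ring.
  - rewrite length_app in H; simpl in H.
    transitivity (sumR (map (fun j => detsum (bin_of l f j) +
                 (if Nat.eqb (f (length l)) j then detsum [x] else 0)) (seq 0 m))).
    { f_equal. apply map_ext. intro j. rewrite bin_of_snoc, detsum_app.
      destruct (Nat.eqb (f (length l)) j); simpl; ring. }
    rewrite sumR_plus, IH, sum_ind_seq, detsum_app.
    + assert (Hf : (f (length l) < m)%nat) by (apply H; lia).
      simpl. destruct (Nat.ltb (f (length l)) m) eqn:E; [reflexivity|].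
      apply Nat.ltb_ge in E; lia.
    + intros; apply H; lia.
Qed.

Lemma sumR_le {A} (f g : A -> R) l :
  (forall j, In j l -> f j <= g j) -> sumR (map f l) <= sumR (map g l).
Proof.
  induction l; intro H; unfold sumR in *; simpl; [lra|].
  assert (f a <= g a) by (apply H; simpl; auto).
  assert (fold_right Rplus 0 (map f l) <= fold_right Rplus 0 (map g l)) by (apply IHl; intros; apply H; simpl; auto).
  lra.
Qed.

Lemma sumR_one s m : sumR (map (fun _ : nat => 1) (seq s m)) = INR m.
Proof.
  revert s; induction m; intro s; unfold sumR in *; [reflexivity|].
  cbn [seq map fold_right]. rewrite IHm, S_INR; ring.
Qed.


Lemma add_to_length k bins x : length (add_to k bins x) = length bins.
Proof. revert k; induction bins; intros [|k]; simpl; auto. Qed.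

Lemma run_aux_mono A past bins items :
  (length bins <= length (run_aux A past bins items))%nat.
Proof.
  revert past bins; induction items as [|x r IH]; intros past bins; simpl; [lia|].
  eapply Nat.le_trans; [|apply IH].
  destruct (Nat.ltb _ _); [rewrite add_to_length|rewrite length_app; simpl]; lia.
Qed.

Definition DSlist (D Sx : item) (p : nat) := concat (repeat [D; Sx] p).

Lemma nth_rep_app {T} (a b : T) i k d :
  (k < i)%nat -> nth k (repeat a i ++ [b]) d = a.
Proof.
  revert k; induction i; intros k Hk; [lia|]. destruct k; simpl; auto. apply IHi; lia.
Qed.

Lemma nth_rep_app2 {T} (a b : T) i d : nth i (repeat a i ++ [b]) d = b.
Proof. induction i; simpl; auto. Qed.

Lemma add_to_rep a b x i : add_to i (repeat a i ++ [b]) x = repeat a i ++ [b ++ [x]].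
Proof. induction i; simpl; auto. rewrite IHi; auto. Qed.

Lemma online alpha A (D Sx : item) :
  any_fit alpha A ->
  viable alpha [D; Sx] -> viable alpha [D] ->
  ~ viable alpha ([D; Sx] ++ [D]) -> ~ viable alpha ([D; Sx] ++ [Sx]) ->
  forall p i past rest,
  (i + p <= length (run_aux A past (repeat [D; Sx] i) (DSlist D Sx p ++ rest)))%nat.
Proof.
  intros HA V1 V2 NV1 NV2. induction p as [|p IH]; intros i past rest.
  - simpl. pose proof (run_aux_mono A past (repeat [D;Sx] i) rest).
    rewrite repeat_length in H. lia.
  - cbn [DSlist repeat concat]. change (DSlist D Sx p) with (concat (repeat [D;Sx] p)).
    simpl app. cbn [run_aux].
    assert (F1 : Forall (viable alpha) (repeat [D; Sx] i)) by (apply Forall_forall; intros b Hb; apply repeat_spec in Hb; subst; auto).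
    destruct (HA past (repeat [D;Sx] i) D F1) as [H1 H2].
    destruct (Nat.ltb (A past (repeat [D; Sx] i) D) (length (repeat [D; Sx] i))) eqn:E1.
    { exfalso. apply Nat.ltb_lt in E1. specialize (H1 E1).
      rewrite repeat_length in E1. rewrite nth_repeat_lt in H1 by auto. auto. }
    cbn [run_aux].
    set (bins' := repeat [D;Sx] i ++ [[D]]).
    assert (F2 : Forall (viable alpha) bins').
    { apply Forall_app; split; auto. }
    destruct (HA (past ++ [D]) bins' Sx F2) as [H3 H4].
    assert (Lb : length bins' = S i) by (unfold bins'; rewrite length_app, repeat_length; simpl; lia).
    destruct (Nat.ltb (A (past ++ [D]) bins' Sx) (length bins')) eqn:E2.
    + apply Nat.ltb_lt in E2. specialize (H3 E2). rewrite Lb in E2.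
      destruct (Nat.lt_ge_cases (A (past ++ [D]) bins' Sx) i) as [L|L].
      * exfalso. unfold bins' in H3. rewrite nth_rep_app in H3 by auto. auto.
      * assert (Ei : A (past ++ [D]) bins' Sx = i) by lia. rewrite Ei.
        unfold bins'. rewrite add_to_rep. simpl app.
        replace (repeat [D; Sx] i ++ [[D; Sx]]) with (repeat [D;Sx] (S i)).
        2:{ rewrite <- repeat_cons. reflexivity. }
        specialize (IH (S i) ((past ++ [D]) ++ [Sx]) rest). unfold DSlist in IH. lia.
    + exfalso. apply Nat.ltb_ge in E2. apply (H4 E2 [D]).
      { unfold bins'. apply in_or_app; right; simpl; auto. }
      exact V1.
Qed.

Open Scope nat_scope.

Lemma d2a p : (2*p) / 2 = p. Proof. symmetry. apply (Nat.div_unique _ _ _ 0); lia. Qed.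
Lemma d2b p : (2*p+1) / 2 = p. Proof. symmetry. apply (Nat.div_unique _ _ _ 1); lia. Qed.
Lemma m2a p : (2*p) mod 2 = 0. Proof. symmetry. apply (Nat.mod_unique _ _ p); lia. Qed.
Lemma m2b p : (2*p+1) mod 2 = 1. Proof. symmetry. apply (Nat.mod_unique _ _ p); lia. Qed.

Definition fpack (N k : nat) (i : nat) : nat :=
  if Nat.ltb i (2 * (N * k)) then
    (if Nat.eqb (i mod 2) 0 then (i / 2) / k else N + (i / 2) / k)
  else 2 * N + (i - 2 * (N * k)).

Lemma DSlist_snoc D Sx p : DSlist D Sx (S p) = (DSlist D Sx p ++ [D]) ++ [Sx].
Proof.
  unfold DSlist. change (repeat [D;Sx] (S p)) with ([D;Sx] :: repeat [D;Sx] p).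
  rewrite repeat_cons, concat_app. simpl. rewrite <- app_assoc. reflexivity.
Qed.

Lemma DSlist_length D Sx p : length (DSlist D Sx p) = (2 * p)%nat.
Proof. induction p; [reflexivity|]. rewrite DSlist_snoc, !length_app, IHp. simpl. lia. Qed.

Definition cnt (k p j : nat) : nat := Nat.min k (p - j * k).

Lemma div_bounds p k : (0 < k)%nat -> ((p / k) * k <= p < (p / k) * k + k)%nat.
Proof.
  intro Hk. pose proof (Nat.div_mod p k ltac:(lia)). pose proof (Nat.mod_upper_bound p k ltac:(lia)).
  lia.
Qed.

Lemma cnt_step k p j : (0 < k)%nat ->
  cnt k (S p) j = (cnt k p j + (if Nat.eqb (p / k) j then 1 else 0))%nat.
Proof.
  intro Hk. unfold cnt. pose proof (div_bounds p k Hk) as [B1 B2].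
  destruct (Nat.eqb (p / k) j) eqn:E.
  - apply Nat.eqb_eq in E. subst j. lia.
  - apply Nat.eqb_neq in E. destruct (Nat.lt_ge_cases (p / k) j) as [L|L].
    + assert ((p / k) * k + k <= j * k)%nat by (replace ((p/k)*k + k)%nat with (S (p/k) * k)%nat by lia; apply Nat.mul_le_mono_r; lia).
      lia.
    + assert (j * k + k <= (p/k) * k)%nat by (replace (j*k + k)%nat with (S j * k)%nat by lia; apply Nat.mul_le_mono_r; lia).
      lia.
Qed.

Lemma repeat_snoc {T} (x : T) c : repeat x c ++ [x] = repeat x (S c).
Proof. rewrite <- repeat_cons. reflexivity. Qed.

Definition binDS (D Sx : item) (N k p j : nat) : list item :=
  if Nat.ltb j N then repeat D (cnt k p j)
  else if Nat.ltb j (2 * N) then repeat Sx (cnt k p (j - N)) else [].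

Lemma div_lt_N p N k : (0 < k)%nat -> (p < N * k)%nat -> (p / k < N)%nat.
Proof. intros Hk H. apply Nat.Div0.div_lt_upper_bound; lia. Qed.

Lemma inv_pairs D Sx N k : (0 < k)%nat -> forall p, (p <= N * k)%nat ->
  forall j, bin_of (DSlist D Sx p) (fpack N k) j = binDS D Sx N k p j.
Proof.
  intros Hk p. induction p as [|p IH]; intros Hp j.
  - change (bin_of (DSlist D Sx 0) (fpack N k) j) with (@nil item).
    unfold binDS, cnt. simpl. replace (Nat.min k 0) with 0%nat by lia.
    destruct (Nat.ltb j N); [reflexivity|].
    destruct (Nat.ltb j _); reflexivity.
  - rewrite DSlist_snoc, !bin_of_snoc, IH by lia. rewrite length_app, DSlist_length. simpl length.
    pose proof (div_lt_N p N k Hk ltac:(lia)) as Hq.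
    assert (F1 : fpack N k (2 * p) = p / k).
    { unfold fpack. destruct (Nat.ltb (2*p) (2*(N*k))) eqn:E; [|apply Nat.ltb_ge in E; lia].
      rewrite m2a, d2a. reflexivity. }
    assert (F2 : fpack N k (2 * p + 1) = (N + p / k)%nat).
    { unfold fpack. destruct (Nat.ltb (2*p+1) (2*(N*k))) eqn:E; [|apply Nat.ltb_ge in E; lia].
      rewrite m2b, d2b. reflexivity. }
    rewrite F1, F2. unfold binDS.
    destruct (Nat.ltb j N) eqn:EjN.
    + apply Nat.ltb_lt in EjN.
      destruct (Nat.eqb (N + p / k) j) eqn:E2; [apply Nat.eqb_eq in E2; lia|].
      rewrite app_nil_r, cnt_step by auto.
      destruct (Nat.eqb (p / k) j); simpl.
      * rewrite repeat_snoc. f_equal. lia.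
      * rewrite app_nil_r, Nat.add_0_r. reflexivity.
    + apply Nat.ltb_ge in EjN.
      destruct (Nat.eqb (p / k) j) eqn:E1; [apply Nat.eqb_eq in E1; lia|].
      rewrite app_nil_r.
      destruct (Nat.ltb j (2 * N)) eqn:Ej2.
      * apply Nat.ltb_lt in Ej2. rewrite cnt_step by auto.
        destruct (Nat.eqb (N + p / k) j) eqn:E2.
        -- apply Nat.eqb_eq in E2. replace (Nat.eqb (p/k) (j - N)) with true by (symmetry; apply Nat.eqb_eq; lia).
           rewrite repeat_snoc. f_equal. lia.
        -- apply Nat.eqb_neq in E2. replace (Nat.eqb (p/k) (j - N)) with false by (symmetry; apply Nat.eqb_neq; lia).
           rewrite app_nil_r, Nat.add_0_r. reflexivity.
      * apply Nat.ltb_ge in Ej2.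
        destruct (Nat.eqb (N + p / k) j) eqn:E2; [apply Nat.eqb_eq in E2; lia|]. reflexivity.
Qed.

Definition binAll (D Sx G : item) (N k g j : nat) : list item :=
  if Nat.ltb j (2 * N) then binDS D Sx N k (N * k) j
  else if Nat.ltb (j - 2 * N) g then [G] else [].

Lemma inv_all D Sx G N k : (0 < k)%nat -> forall g j,
  bin_of (DSlist D Sx (N * k) ++ repeat G g) (fpack N k) j = binAll D Sx G N k g j.
Proof.
  intros Hk g. induction g as [|g IH]; intro j.
  - rewrite app_nil_r, inv_pairs by lia. unfold binAll, binDS.
    destruct (Nat.ltb j (2*N)) eqn:E; auto.
    destruct (Nat.ltb j N) eqn:E'; [apply Nat.ltb_lt in E'; apply Nat.ltb_ge in E; lia|].
    destruct (Nat.ltb (j - 2*N) 0) eqn:E''; [apply Nat.ltb_lt in E''; lia|]. reflexivity.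
  - rewrite <- repeat_snoc, app_assoc, bin_of_snoc, IH, length_app, DSlist_length, repeat_length.
    assert (F : fpack N k (2 * (N * k) + g) = (2 * N + g)%nat).
    { unfold fpack. destruct (Nat.ltb _ _) eqn:E; [apply Nat.ltb_lt in E; lia|]. f_equal. lia. }
    rewrite F. unfold binAll.
    destruct (Nat.ltb j (2 * N)) eqn:E.
    + apply Nat.ltb_lt in E. destruct (Nat.eqb (2*N+g) j) eqn:E2; [apply Nat.eqb_eq in E2; lia|].
      apply app_nil_r.
    + apply Nat.ltb_ge in E.
      destruct (Nat.eqb (2*N+g) j) eqn:E2.
      * apply Nat.eqb_eq in E2. subst j.
        replace (Nat.ltb (2*N+g-2*N) g) with false by (symmetry; apply Nat.ltb_ge; lia).
        replace (Nat.ltb (2*N+g-2*N) (S g)) with true by (symmetry; apply Nat.ltb_lt; lia). reflexivity.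
      * apply Nat.eqb_neq in E2. rewrite app_nil_r.
        destruct (Nat.ltb (j - 2*N) g) eqn:E3; destruct (Nat.ltb (j - 2*N) (S g)) eqn:E4; auto;
        repeat match goal with
        | H : Nat.ltb _ _ = true |- _ => apply Nat.ltb_lt in H
        | H : Nat.ltb _ _ = false |- _ => apply Nat.ltb_ge in H
        end; lia.
Qed.

Lemma fpack_bound N k i : (0 < k)%nat -> (i < 2 * (N * k) + N)%nat -> (fpack N k i < 3 * N)%nat.
Proof.
  intros Hk Hi. unfold fpack. destruct (Nat.ltb i (2*(N*k))) eqn:E.
  - apply Nat.ltb_lt in E. assert (i / 2 < N * k)%nat by (apply Nat.Div0.div_lt_upper_bound; lia).
    pose proof (div_lt_N (i/2) N k Hk H).
    destruct (Nat.eqb (i mod 2) 0); lia.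
  - apply Nat.ltb_ge in E. lia.
Qed.

Open Scope R_scope.


Lemma ovf_repS0 q a : 0 <= q <= 1 -> ovf (repeat (mkItem q 1) a) 0 <= INR a * q.
Proof.
  intro Hq. induction a.
  - simpl. rewrite ovf_nil. destruct Rlt_dec; lra.
  - cbn [repeat]. rewrite ovf_cons. simpl bprob; simpl bsize.
    rewrite ovf_neg by (try lra; apply Forall_forall; intros x Hx; apply repeat_spec in Hx; subst; unfold probok; simpl; lra).
    pose proof (ovf_nonneg (repeat (mkItem q 1) a) 0 ltac:(apply Forall_forall; intros x Hx; apply repeat_spec in Hx; subst; unfold probok; simpl; lra)).
    rewrite S_INR. nra.
Qed.

Lemma ovf_repS1 q a : 0 <= q <= 1 -> ovf (repeat (mkItem q 1) a) 1 <= q * q * (INR a * INR a).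
Proof.
  intro Hq. induction a.
  - simpl. rewrite ovf_nil. destruct Rlt_dec; lra.
  - cbn [repeat]. rewrite ovf_cons. simpl bprob; simpl bsize.
    replace (1 - 1) with 0 by ring.
    pose proof (ovf_repS0 q a Hq).
    pose proof (ovf_nonneg (repeat (mkItem q 1) a) 1 ltac:(apply Forall_forall; intros x Hx; apply repeat_spec in Hx; subst; unfold probok; simpl; lra)).
    pose proof (pos_INR a).
    rewrite S_INR. nra.
Qed.

Lemma ovf_repD p s a t : 0 <= s -> INR a * s <= t -> ovf (repeat (mkItem p s) a) t = 0.
Proof.
  intros Hs H. apply ovf_zero.
  - apply Forall_forall; intros x Hx; apply repeat_spec in Hx; subst; simpl; lra.
  - enough (sumsize (repeat (mkItem p s) a) = INR a * s) by lra.
    clear H. induction a; simpl; [ring|]. rewrite IHa. destruct a; simpl; ring.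
Qed.

Lemma detsum_DS D Sx p : bprob D <> 1 -> bprob Sx <> 1 -> detsum (DSlist D Sx p) = 0.
Proof.
  intros H1 H2. induction p; [reflexivity|].
  rewrite DSlist_snoc, !detsum_app, IHp. simpl.
  destruct (Req_EM_T (bprob D) 1); destruct (Req_EM_T (bprob Sx) 1); try contradiction. ring.
Qed.

Lemma detsum_G n : detsum (repeat (mkItem 1 1) n) = INR n.
Proof.
  induction n; [reflexivity|]. cbn [repeat detsum]. rewrite IHn, S_INR. simpl bprob.
  destruct (Req_EM_T 1 1); [|contradiction]. simpl. ring.
Qed.


Ltac expand := repeat (rewrite ovf_cons; simpl bprob; simpl bsize); rewrite !ovf_nil;
  repeat (destruct Rlt_dec).

Section V.
Variables (a sD : R).
Hypothesis Ha : 0 < a <= 1/16.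
Hypothesis Hs : 0 < sD <= 1.
Let D := mkItem (1/2) sD.
Let Sx := mkItem (2*a) 1.

Lemma v1 : viable a [D; Sx].
Proof. unfold viable; rewrite overflow_ovf; unfold D, Sx; expand; nra. Qed.
Lemma v2 : viable a [D].
Proof. unfold viable; rewrite overflow_ovf; unfold D, Sx; expand; nra. Qed.
Lemma nv1 : ~ viable a ([D; Sx] ++ [D]).
Proof. unfold viable; rewrite overflow_ovf, ovf_snoc; unfold D, Sx; expand; nra. Qed.
Lemma nv2 : ~ viable a ([D; Sx] ++ [Sx]).
Proof. unfold viable; rewrite overflow_ovf, ovf_snoc; unfold D, Sx; expand; nra. Qed.
End V.


Lemma in_DSlist D Sx p x : In x (DSlist D Sx p) -> x = D \/ x = Sx.
Proof.
  unfold DSlist. intro H. apply in_concat in H as [l [Hl Hx]].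
  apply repeat_spec in Hl. subst. simpl in Hx. intuition.
Qed.

Theorem theorem2 :
  exists (c alpha0 : R), 0 < c /\ 0 < alpha0 <= 1 / 2 /\
    forall alpha : R, 0 < alpha <= alpha0 ->
    forall A : algorithm, any_fit alpha A ->
    forall N : nat, (0 < N)%nat ->
    exists items : list item,
      Forall valid_item items /\
      exists opt : nat,
        is_OPT alpha items opt /\ (N <= opt)%nat /\
        c * / sqrt alpha * INR opt <= INR (bins_used A items).
Proof.
  exists (1/12), (1/16). split; [lra|]. split; [lra|].
  intros al Hal A HA N HN.
  set (sa := sqrt al).
  assert (Hsa0 : 0 < sa) by (apply sqrt_lt_R0; lra).
  assert (Hsa2 : sa * sa = al) by (apply sqrt_sqrt; lra).
  assert (Hsa1 : sa <= 1/4) by nra.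
  set (x := / (4 * sa)).
  assert (Hx4 : x * (4 * sa) = 1) by (unfold x; field; lra).
  assert (Hx1 : 1 <= x) by nra.
  destruct (archimed x) as [Hz1 Hz2].
  set (z := up x) in *.
  assert (Hz0 : (0 <= z)%Z) by (apply le_IZR; change (IZR 0) with 0; lra).
  set (k := Z.to_nat z).
  assert (Hk : INR k = IZR z) by (unfold k; rewrite INR_IZR_INZ, Z2Nat.id; auto).
  assert (Hk0 : (0 < k)%nat) by (destruct (Nat.eq_dec k 0) as [E|E]; [rewrite E in Hk; simpl in Hk; lra | lia]).
  assert (HkR : 1 <= INR k) by (apply (le_INR 1); lia).
  assert (Hk2 : 4 * (al * al) * (INR k * INR k) <= al).
  { assert (Hk2x : INR k <= 2 * x) by (rewrite Hk; lra).
    assert (H1 : INR k * sa <= 1/2) by nra.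
    assert (H2 : 0 <= INR k * sa) by nra.
    assert (H3 : (INR k * sa) * (INR k * sa) <= 1/4) by nra.
    replace ((INR k * sa) * (INR k * sa)) with (INR k * INR k * al) in H3 by (rewrite <- Hsa2; ring).
    nra. }
  set (sD := / INR k).
  assert (HsD : sD * INR k = 1) by (unfold sD; field; lra).
  assert (HsD1 : 0 < sD <= 1) by (split; nra).
  set (D := mkItem (1/2) sD). set (Sx := mkItem (2*al) 1). set (G := mkItem 1 1).
  set (items := DSlist D Sx (N * k) ++ repeat G N).
  assert (Hval : Forall valid_item items).
  { apply Forall_forall. intros y Hy. unfold items in Hy. apply in_app_or in Hy as [Hy|Hy].
    - apply in_DSlist in Hy as [->| ->]; unfold valid_item, D, Sx; simpl; lra.
    - apply repeat_spec in Hy; rewrite Hy; unfold valid_item, G; simpl; lra. }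
  assert (Hlen : length items = (2 * (N * k) + N)%nat).
  { unfold items. rewrite length_app, DSlist_length, repeat_length. lia. }
  assert (Hpack : viable_packing al items (3 * N) (fpack N k)).
  { split.
    - intros i Hi. rewrite Hlen in Hi. apply fpack_bound; auto.
    - intros j Hj. unfold items. rewrite inv_all by auto. unfold binAll, binDS, viable.
      rewrite overflow_ovf.
      destruct (Nat.ltb j (2*N)) eqn:E1; [destruct (Nat.ltb j N) eqn:E2|].
      + unfold D. rewrite ovf_repD; [lra|lra|]. unfold cnt.
        assert (INR (Nat.min k (N * k - j * k)) <= INR k) by (apply le_INR; lia). nra.
      + pose proof (ovf_repS1 (2*al) (cnt k (N*k) (j - N)) ltac:(lra)).
        assert (INR (cnt k (N * k) (j - N)) <= INR k) by (apply le_INR; unfold cnt; lia).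
        pose proof (pos_INR (cnt k (N * k) (j - N))).
        fold Sx in H. set (c := INR (cnt k (N * k) (j - N))) in *.
        assert (c * c <= INR k * INR k) by nra.
        assert (2 * al * (2 * al) * (c * c) <= 4 * (al * al) * (INR k * INR k)) by nra.
        lra.
      + destruct (Nat.ltb (j - 2*N) N).
        * change [G] with (repeat G 1). unfold G. rewrite ovf_repD; simpl; lra.
        * change (@nil item) with (repeat G 0). unfold G. rewrite ovf_repD; simpl; lra. }
  assert (Hlow : forall m f, viable_packing al items m f -> (N <= m)%nat).
  { intros m f [Hf Hv].
    assert (Hd : detsum items = INR N).
    { unfold items. rewrite detsum_app, detsum_DS, detsum_G; unfold D, Sx; simpl; lra. }
    pose proof (sum_bins_detsum items f m Hf) as Hs.
    assert (Hle : sumR (map (fun j => detsum (bin_of items f j)) (seq 0 m)) <=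
                  sumR (map (fun _ => 1) (seq 0 m))).
    { apply sumR_le. intros j Hj. apply in_seq in Hj.
      specialize (Hv j ltac:(lia)). unfold viable in Hv. rewrite overflow_ovf in Hv.
      destruct (Rle_lt_dec (detsum (bin_of items f j)) 1) as [L|L]; auto.
      exfalso. rewrite ovf_one in Hv; [lra| |auto].
      apply Forall_forall. intros y Hy. apply bin_of_in in Hy.
      rewrite Forall_forall in Hval. specialize (Hval y Hy). unfold valid_item in Hval. lra. }
    rewrite Hs, Hd, sumR_one in Hle. apply INR_le; auto. }
  destruct (dec_inh_nat_subset_has_unique_least_element
              (fun m => exists f, viable_packing al items m f)
              (fun m => classic _) (ex_intro _ (3 * N)%nat (ex_intro _ _ Hpack)))
    as [opt [[[fo Hfo] Hmin] _]].
  exists items. split; auto. exists opt.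
  assert (Hopt3 : (opt <= 3 * N)%nat) by (apply Hmin; eauto).
  split; [split; [eauto| intros m f Hmf; apply Hmin; eauto]|].
  split; [eapply Hlow; eauto|].
  assert (Hon : (N * k <= bins_used A items)%nat).
  { unfold bins_used, items.
    pose proof (online al A D Sx HA (v1 al sD ltac:(lra) HsD1) (v2 al sD ltac:(lra) HsD1)
                 (nv1 al sD ltac:(lra) HsD1) (nv2 al sD ltac:(lra) HsD1) (N * k) 0 [] (repeat G N)).
    simpl in H. exact H. }
  apply le_INR in Hon. apply le_INR in Hopt3. rewrite mult_INR in Hon, Hopt3.
  assert (Hk3 : x <= INR k) by (rewrite Hk; lra).
  pose proof (pos_INR N).
  assert (Hinv : / sa = 4 * x) by (unfold x; field; lra).
  rewrite Hinv. simpl (INR 3) in Hopt3. nra.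
Qed.
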